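(* Let $k$ be a ring and let $G$ be a group. Then for every integer $n\ge1$ there is a canonical ring isomorphism $D^1(M_n(k)[G])\simeq M_n(D^1(k[G]))$.
   Context: For a ring $R$ and group $G$, $R[G]$ is the group ring and $(R[G])[G]$ the set of finitely supported maps $\beta\colon G\to R[G]$. $D^1(R[G])=R[G]\times(R[G])[G]$ with componentwise addition and multiplication $(\alpha_1,\beta_1)*(\alpha_2,\beta_2)=(\alpha_1\alpha_2,\alpha_1\beta_2+\beta_1\alpha_2+\beta_1\beta_2)$, where $\alpha_1\alpha_2$ is the group ring product and $(\alpha\beta)(g)(h)=\sum_{t\in G}\alpha(t)\beta(gt)(t^{-1}h)$, $(\beta\alpha)(g)(h)=\sum_t\beta(g)(t)\alpha(t^{-1}h)$, $(\beta\gamma)(g)(h)=\sum_t\beta(g)(t)\gamma(gt)(t^{-1}h)$. $M_n(\cdot)$ denotes $n\times n$ matrices. *)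

(* Defs.v *)
From HB Require Import structures.
From mathcomp Require Import all_boot all_order all_algebra.
From mathcomp Require Import monoid.
From mathcomp Require Import boolp classical_sets cardinality fsbigop.

Set Implicit Arguments.
Unset Strict Implicit.
Unset Printing Implicit Defensive.

Import GRing.Theory.
Local Open Scope ring_scope.
Local Open Scope classical_set_scope.

(* G is an arbitrary (possibly infinite) group: mathcomp's [groupType]      *)
(* Elements of R[G] are functions G -> R with finite support; elements of   *)
(* (R[G])[G] are finitely supported maps G -> R[G], represented as curried  *)
(* functions G -> G -> R.                                                   *)

Section GroupRing.
Variables (R : pzRingType) (G : groupType).

Local Notation gmul := (@monoid.mul G).
Local Notation ginv := (@monoid.inv G).
Local Notation gone := (@monoid.one G).

Definition gr_fin (a : G -> R) : Prop := finite_set [set g | a g != 0].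

Definition gr_add (a b : G -> R) : G -> R := fun g => a g + b g.
Definition gr_zero : G -> R := fun _ => 0.
Definition gr_one : G -> R := fun g => if g == gone then 1 else 0.
Definition gr_mul (a b : G -> R) : G -> R :=
  fun h => \sum_(t \in @setT G) a t * b (gmul (ginv t) h).

Definition D1 := ((G -> R) * (G -> G -> R))%type.

Definition grg_fin (b : G -> G -> R) : Prop :=
  finite_set [set g | b g <> gr_zero] /\ (forall g, gr_fin (b g)).

Definition D1_fin (x : D1) : Prop := gr_fin x.1 /\ grg_fin x.2.

Definition grg_add (b c : G -> G -> R) : G -> G -> R :=
  fun g h => b g h + c g h.

Definition D1_lmul (a : G -> R) (b : G -> G -> R) : G -> G -> R :=
  fun g h => \sum_(t \in @setT G) a t * b (gmul g t) (gmul (ginv t) h).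
Definition D1_rmul (b : G -> G -> R) (a : G -> R) : G -> G -> R :=
  fun g h => \sum_(t \in @setT G) b g t * a (gmul (ginv t) h).
Definition D1_bmul (b c : G -> G -> R) : G -> G -> R :=
  fun g h => \sum_(t \in @setT G) b g t * c (gmul g t) (gmul (ginv t) h).

Definition D1_add (x y : D1) : D1 := (gr_add x.1 y.1, grg_add x.2 y.2).
Definition D1_zero : D1 := (gr_zero, fun _ _ => 0).
Definition D1_one : D1 := (gr_one, fun _ _ => 0).
Definition D1_mul (x y : D1) : D1 :=
  (gr_mul x.1 y.1,
   grg_add (grg_add (D1_lmul x.1 y.2) (D1_rmul x.2 y.1)) (D1_bmul x.2 y.2)).

End GroupRing.

Section MatrixOps.
Variables (T : Type) (add mul : T -> T -> T) (zero one : T) (n : nat).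

Definition mxo_add (A B : 'M[T]_n) : 'M[T]_n :=
  \matrix_(i, j) add (A i j) (B i j).
Definition mxo_mul (A B : 'M[T]_n) : 'M[T]_n :=
  \matrix_(i, j) \big[add/zero]_(l < n) mul (A i l) (B l j).
Definition mxo_one : 'M[T]_n :=
  \matrix_(i, j) if i == j then one else zero.
Definition mxo_fin (P : T -> Prop) (A : 'M[T]_n) : Prop := forall i j, P (A i j).

End MatrixOps.

Definition ring_iso_on {A B : Type} (PA : A -> Prop) (addA mulA : A -> A -> A)
    (oneA : A) (PB : B -> Prop) (addB mulB : B -> B -> B) (oneB : B)
    (f : A -> B) : Prop :=
  (forall x, PA x -> PB (f x)) /\
  (forall x y, PA x -> PA y -> f x = f y -> x = y) /\
  (forall y, PB y -> exists2 x, PA x & f x = y) /\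
  (forall x y, PA x -> PA y -> f (addA x y) = addB (f x) (f y)) /\
  (forall x y, PA x -> PA y -> f (mulA x y) = mulB (f x) (f y)) /\
  f oneA = oneB.

Definition D1_to_mx (k : pzRingType) (G : groupType) (n : nat)
    (x : D1 'M[k]_n G) : 'M[D1 k G]_n :=
  \matrix_(i, j) ((fun g => x.1 g i j), (fun g h => x.2 g h i j)).

(* Main.v *)
Require Import Defs.
From HB Require Import structures.
From mathcomp Require Import all_boot all_order all_algebra.
From mathcomp Require Import monoid.
From mathcomp Require Import finmap boolp classical_sets cardinality fsbigop.
Set Implicit Arguments.
Unset Strict Implicit.
Unset Printing Implicit Defensive.
Import GRing.Theory.
Local Open Scope ring_scope.
Local Open Scope classical_set_scope.

Lemma fsum_fin (G : groupType) (V : nmodType) (F : G -> V) (S : set G) :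
  finite_set S -> (forall t, F t != 0 -> S t) ->
  \sum_(t \in [set: G]) F t = \sum_(t <- fset_set S) F t.
Proof.
move=> fS sub; apply: fsbigTE => i; rewrite in_fset_set // => iS.
apply/eqP; apply: contraNT iS => /sub H; by rewrite inE.
Qed.

Lemma key (k : pzRingType) (G : groupType) n (A B : G -> 'M[k]_n) i j :
  finite_set [set t | A t != 0] ->
  (\sum_(t \in [set: G]) A t * B t) i j
  = \sum_(l < n) \sum_(t \in [set: G]) A t i l * B t l j.
Proof.
move=> fA; rewrite (fsum_fin fA); last first.
  by move=> t; apply: contraNneq => ->; rewrite mul0r.
rewrite summxE; under eq_bigr do rewrite -mulmxE mxE.
rewrite exchange_big; apply: eq_bigr => l _; rewrite (fsum_fin fA) //.
by move=> t; apply: contraNneq => ->; rewrite mxE mul0r.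
Qed.

Lemma D1_big_fst (R : pzRingType) (G : groupType) n (F : 'I_n -> D1 R G) g :
  (\big[@D1_add R G/D1_zero R G]_(l < n) F l).1 g = \sum_(l < n) (F l).1 g.
Proof.
apply: (big_rec2 (fun x y => x.1 g = y)) => //= l x y _ <- //.
Qed.

Lemma D1_big_snd (R : pzRingType) (G : groupType) n (F : 'I_n -> D1 R G) g h :
  (\big[@D1_add R G/D1_zero R G]_(l < n) F l).2 g h = \sum_(l < n) (F l).2 g h.
Proof.
apply: (big_rec2 (fun x y => x.2 g h = y)) => //= l x y _ <- //.
Qed.

Section Main.
Variables (k : pzRingType) (G : groupType) (n : nat).
Local Notation M := 'M[k]_n.

Lemma part_fin (x : D1 M G) : D1_fin x -> mxo_fin (@D1_fin k G) (D1_to_mx x).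
Proof.
case: x => a b [/= fa [fb fbg]] i j; rewrite mxE; split => /=.
  apply: sub_finite_set fa => g /=; apply: contraNneq => ->; by rewrite mxE.
split.
  apply: sub_finite_set fb => g /= H E; apply: H; rewrite E /gr_zero.
  by apply/funext => h; rewrite mxE.
move=> g; apply: sub_finite_set (fbg g) => h /=; apply: contraNneq => ->; by rewrite mxE.
Qed.

Lemma part_inj (x y : D1 M G) : D1_to_mx x = D1_to_mx y -> x = y.
Proof.
case: x => a b; case: y => c d E.
have E' (i j : 'I_n) := congr1 (fun A : 'M[D1 k G]_n => A i j) E.
congr pair; apply/funext => g.
  apply/matrixP => i j; move: (E' i j); rewrite !mxE; case=> E1 _.
  exact: (congr1 (fun f => f g) E1).
apply/funext => h; apply/matrixP => i j; move: (E' i j); rewrite !mxE; case=> _ E2.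
exact: (congr1 (fun f => f g h) E2).
Qed.

Lemma part_surj (Y : 'M[D1 k G]_n) : mxo_fin (@D1_fin k G) Y ->
  exists2 x, D1_fin x & D1_to_mx x = Y.
Proof.
move=> fY.
exists ((fun g => \matrix_(i, j) (Y i j).1 g), (fun g h => \matrix_(i, j) (Y i j).2 g h)).
  split => /=.
    apply: (@sub_finite_set _ _ (\bigcup_(p in [set: 'I_n * 'I_n]) [set g | (Y p.1 p.2).1 g != 0])).
      move=> g /= Hg.
      have [[i [j Hij]]|Hn] := pselect (exists i j, (Y i j).1 g != 0).
        by exists (i, j).
      move: Hg; apply: contraNP => _; idtac.
      apply/eqP/matrixP => i j; rewrite !mxE; apply/eqP/negPn/negP => H; apply: Hn; by exists i, j.
    apply: bigcup_finite; first exact: finite_finset.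
    by move=> [i j] _; case: (fY i j).
  split.
    apply: (@sub_finite_set _ _ (\bigcup_(p in [set: 'I_n * 'I_n]) [set g | (Y p.1 p.2).2 g <> @gr_zero k G])).
      move=> g /= Hg.
      have [[i [j Hij]]|Hn] := pselect (exists i j, (Y i j).2 g <> @gr_zero k G).
        by exists (i, j).
      exfalso; apply: Hg; apply/funext => h; apply/matrixP => i j; rewrite !mxE.
      have H0 : (Y i j).2 g = @gr_zero k G by apply: (contra_notP _ Hn) => H; exists i, j.
      by rewrite H0.
    apply: bigcup_finite; first exact: finite_finset.
    by move=> [i j] _; case: (fY i j) => _ [].
  move=> g.
  apply: (@sub_finite_set _ _ (\bigcup_(p in [set: 'I_n * 'I_n]) [set h | (Y p.1 p.2).2 g h != 0])).
    move=> h /= Hg.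
    have [[i [j Hij]]|Hn] := pselect (exists i j, (Y i j).2 g h != 0).
      by exists (i, j).
    move: Hg; apply: contraNP => _.
    apply/eqP/matrixP => i j; rewrite !mxE; apply/eqP/negPn/negP => H; apply: Hn; by exists i, j.
  apply: bigcup_finite; first exact: finite_finset.
  by move=> [i j] _; case: (fY i j) => _ [_]; apply.
apply/matrixP => i j; rewrite mxE [RHS]surjective_pairing; congr pair.
  by apply/funext => g; rewrite mxE.
by apply/funext => g; apply/funext => h; rewrite mxE.
Qed.

Lemma part_add (x y : D1 M G) :
  D1_to_mx (D1_add x y) = mxo_add (@D1_add k G) (D1_to_mx x) (D1_to_mx y).
Proof.
case: x => a b; case: y => c d; apply/matrixP => i j; rewrite !mxE /D1_add /=.
congr pair; apply/funext => g; rewrite /gr_add /grg_add.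
  by rewrite mxE.
by apply/funext => h; rewrite mxE.
Qed.

Lemma part_one :
  D1_to_mx (D1_one M G) = mxo_one (D1_zero k G) (D1_one k G) n.
Proof.
apply/matrixP => i j; rewrite /mxo_one !mxE /D1_one /D1_zero /=.
case: ifP => [/eqP <-|/eqP ne];
  congr pair; apply/funext => g; rewrite /gr_one;
  try (apply/funext => h); try (case: (g == _)); rewrite ?mxE ?eqxx //=.
by case: eqP.
Qed.

Lemma part_mul (x y : D1 M G) : D1_fin x -> D1_fin y ->
  D1_to_mx (D1_mul x y) =
  mxo_mul (@D1_add k G) (@D1_mul k G) (D1_zero k G) (D1_to_mx x) (D1_to_mx y).
Proof.
case: x => a b; case: y => c d [/= fa [fb fbg]] _.
apply/matrixP => i j; rewrite /mxo_mul !mxE [RHS]surjective_pairing; congr pair.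
  apply/funext => g /=; rewrite D1_big_fst.
  under eq_bigr do rewrite !mxE /=.
  by rewrite /gr_mul key.
apply/funext => g; apply/funext => h /=; rewrite D1_big_snd.
under eq_bigr do rewrite !mxE /=.
rewrite /grg_add !big_split /= !mxE /D1_lmul /D1_rmul /D1_bmul !key //. all: exact: fbg.
Qed.

End Main.

Theorem proposition7p1 (k : pzRingType) (G : groupType) (n : nat) :
  (1 <= n)%N ->
  ring_iso_on
    (@D1_fin 'M[k]_n G) (@D1_add 'M[k]_n G) (@D1_mul 'M[k]_n G)
    (@D1_one 'M[k]_n G)
    (mxo_fin (@D1_fin k G))
    (@mxo_add (D1 k G) (@D1_add k G) n)
    (@mxo_mul (D1 k G) (@D1_add k G) (@D1_mul k G) (@D1_zero k G) n)
    (@mxo_one (D1 k G) (@D1_zero k G) (@D1_one k G) n)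
    (@D1_to_mx k G n).
Proof.
move=> _; split; first exact: part_fin.
split; first by move=> x y _ _; exact: part_inj.
split; first exact: part_surj.
split; first by move=> x y _ _; exact: part_add.
split; first by move=> x y fx fy; exact: part_mul.
exact: part_one.
Qed.
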